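(* Fix the orthonormal basis $\{|0\rangle,|1\rangle\}$ of $\mathbb{C}^2$ and, for a Hermitian operator $X$ on $\mathbb{C}^2$, let $C(X):=\big\|X-\sum_{i\in\{0,1\}}\langle i|X|i\rangle\,|i\rangle\langle i|\big\|_1$ (trace norm). For every $\varepsilon>0$ there exist a finite set $\mathcal{S}$ of qubit density operators and a finite set of qubit POVMs, with $\mathcal{E}$ the set of all their POVM elements, such that: (i) $C(X)\le\varepsilon$ for every $X\in\mathcal{S}\cup\mathcal{E}$; (ii) $C(\rho)>0$ for some $\rho\in\mathcal{S}$ and $C(E)>0$ for some $E\in\mathcal{E}$; and (iii) the prepare-and-measure scenario $(\mathcal{S},\mathcal{E})$ admits no noncontextual ontological model.
   Context: A noncontextual ontological model for a quantum prepare-and-measure scenario consisting of a finite set $\mathcal{S}$ of density operators and a finite set $\mathcal{E}$ of effects (the elements of finitely many POVMs) is: a finite set $\Lambda$; a map $\rho\mapsto\mu_\rho$ from the convex hull of $\mathcal{S}$ to probability distributions on $\Lambda$ that is convex-linear (so it depends only on the operator, not on how it is decomposed as a mixture); and a map $E\mapsto\xi_E$ from the convex hull of $\mathcal{E}\cup\{0,\mathbb{1}\}$ to functions $\Lambda\to[0,1]$ that is convex-linear with $\xi_{\mathbb{1}}\equiv 1$; such that $\mathrm{Tr}(E\rho)=\sum_{\lambda\in\Lambda}\xi_E(\lambda)\mu_\rho(\lambda)$ for all $\rho\in\mathcal{S}$, $E\in\mathcal{E}$. (Equivalently, the associated GPT fragment is simplex-embeddable.) *)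

(* Defs.v *)
From HB Require Import structures.
From mathcomp Require Import all_boot all_order all_algebra.
From mathcomp Require Import sesquilinear spectral.
From mathcomp Require Import complex.
From mathcomp Require Import reals.
Set Implicit Arguments. Unset Strict Implicit. Unset Printing Implicit Defensive.
Import Order.TTheory GRing.Theory Num.Theory.
Local Open Scope ring_scope.
Local Open Scope sesquilinear_scope.
Local Open Scope complex_scope.

Section Qubit.
Variable R : realType.
Local Notation C := (R[i]).
Local Notation M := ('M[C]_2).

Definition adj m n (A : 'M[C]_(m, n)) : 'M[C]_(n, m) := (A ^t Num.conj_op).

Definition hermitian (A : M) : Prop := adj A = A.

Definition psd (A : M) : Prop :=
  hermitian A /\ forall v : 'cV[C]_2, 0 <= ((adj v) *m A *m v) 0 0.

Definition density (A : M) : Prop := psd A /\ \tr A = 1.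

Definition povm (P : seq M) : Prop :=
  (forall E, E \in P -> psd E) /\ \sum_(E <- P) E = 1%:M.

(* Trace norm of a Hermitian (more generally normal) matrix: the sum of the
   absolute values of its eigenvalues, read off its spectral (Schur)
   decomposition A = U^-1 diag(d) U with U unitary. *)
Definition trnorm (A : M) : R :=
  complex.Re (\sum_(j < 2) `|spectral_diag A 0 j|).

Definition dephase (X : M) : M := \matrix_(i, j) (if i == j then X i j else 0).

Definition coh (X : M) : R := trnorm (X - dephase X).

Definition in_hull (s : seq M) (A : M) : Prop :=
  exists w : 'I_(size s) -> R,
    (forall k, 0 <= w k) /\ \sum_k w k = 1 /\
    A = \sum_k (w k)%:C *: s`_k.

Definition nc_model (S E : seq M) : Prop :=
  exists (L : finType) (mu : M -> L -> R) (xi : M -> L -> R),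
    (forall rho, in_hull S rho ->
       (forall l, 0 <= mu rho l) /\ \sum_l mu rho l = 1) /\
    (forall rho1 rho2 (p : R), in_hull S rho1 -> in_hull S rho2 ->
       0 <= p <= 1 ->
       forall l, mu (p%:C *: rho1 + (1 - p)%:C *: rho2) l
                 = p * mu rho1 l + (1 - p) * mu rho2 l) /\
    (forall F, in_hull (0 :: 1%:M :: E) F ->
       forall l, 0 <= xi F l <= 1) /\
    (forall F1 F2 (p : R), in_hull (0 :: 1%:M :: E) F1 ->
       in_hull (0 :: 1%:M :: E) F2 -> 0 <= p <= 1 ->
       forall l, xi (p%:C *: F1 + (1 - p)%:C *: F2) l
                 = p * xi F1 l + (1 - p) * xi F2 l) /\
    (forall l, xi 1%:M l = 1) /\
    (forall rho F, rho \in S -> F \in E ->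
       \tr (F *m rho) = (\sum_l xi F l * mu rho l)%:C).
End Qubit.

(* Main.v *)
Require Import Defs.
From HB Require Import structures.
From mathcomp Require Import all_boot all_order all_algebra.
From mathcomp Require Import sesquilinear spectral complex reals.
From mathcomp Require Import ring lra.
Import Order.TTheory GRing.Theory Num.Theory.
Local Open Scope ring_scope.
Local Open Scope complex_scope.
Local Open Scope sesquilinear_scope.

Section Aux.
Variable R : realType.
Local Notation C := (R[i]).
Local Notation M := ('M[C]_2).

Definition mkM (x y z : R) : M :=
  \matrix_(i, j) (if (i : nat) == 0%N then (if (j : nat) == 0%N then x else y)
                  else (if (j : nat) == 0%N then y else z))%:C.

Lemma mkME x y z (i j : 'I_2) : mkM x y z i j =
  (if (i : nat) == 0%N then (if (j : nat) == 0%N then x else y)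
                  else (if (j : nat) == 0%N then y else z))%:C.
Proof. by rewrite mxE. Qed.

Lemma ord2_cases (i : 'I_2) : i = 0 \/ i = 1.
Proof. case: i => [[|[|?]] Hi]; [left|right|by []]; exact: val_inj. Qed.

Lemma mkM_ext x y z x' y' z' : x = x' -> y = y' -> z = z' -> mkM x y z = mkM x' y' z'.
Proof. by move=> -> -> ->. Qed.
Lemma mkM_lin a b x y z x' y' z' :
  a%:C *: mkM x y z + b%:C *: mkM x' y' z' =
  mkM (a*x+b*x') (a*y+b*y') (a*z+b*z').
Proof.
apply/matrixP => i j; rewrite !mxE.
by case: ifP => _; case: ifP => _; rewrite rmorphD !rmorphM.
Qed.

Lemma mkM_sub x y z x' y' z' :
  mkM x y z - mkM x' y' z' = mkM (x-x') (y-y') (z-z').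
Proof.
apply/matrixP => i j; rewrite !mxE.
by case: ifP => _; case: ifP => _; rewrite rmorphB.
Qed.

Lemma mkM1 : 1%:M = mkM 1 0 1 :> M.
Proof.
apply/matrixP => i j; rewrite !mxE.
by case: (ord2_cases i) => ->; case: (ord2_cases j) => ->.
Qed.

Lemma mkM0 : 0 = mkM 0 0 0 :> M.
Proof.
apply/matrixP => i j; rewrite !mxE.
by case: ifP => _; case: ifP => _.
Qed.

Lemma tr_mkM x y z : \tr (mkM x y z) = (x + z)%:C.
Proof.
by rewrite /mxtrace !big_ord_recr big_ord0 /= !mxE /= add0r rmorphD.
Qed.

Lemma tr_mkM_mul x y z x' y' z' :
  \tr (mkM x y z *m mkM x' y' z') = (x*x' + 2*y*y' + z*z')%:C.
Proof.
rewrite /mxtrace !big_ord_recr big_ord0 /= !mxE /=.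
rewrite !big_ord_recr !big_ord0 /= !mxE /= !add0r.
rewrite -!rmorphM -!rmorphD; congr (_%:C); ring.
Qed.

Lemma dephase_mkM x y z : dephase (mkM x y z) = mkM x 0 z.
Proof.
apply/matrixP => i j; rewrite !mxE.
by case: (ord2_cases i) => ->; case: (ord2_cases j) => ->.
Qed.

Lemma adj_mkM x y z : adj (mkM x y z) = mkM x y z.
Proof.
apply/matrixP => i j; rewrite !mxE /=.
case: (ord2_cases i) => ->; case: (ord2_cases j) => -> /=; exact: conjc_real.
Qed.

Lemma mkM_scale a x y z : a%:C *: mkM x y z = mkM (a*x) (a*y) (a*z).
Proof.
apply/matrixP => i j; rewrite !mxE.
by case: ifP => _; case: ifP => _; rewrite rmorphM.
Qed.

Lemma mkM_add x y z x' y' z' : mkM x y z + mkM x' y' z' = mkM (x+x') (y+y') (z+z').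
Proof.
apply/matrixP => i j; rewrite !mxE.
by case: ifP => _; case: ifP => _; rewrite rmorphD.
Qed.
Lemma sum2 (V : nmodType) (F : 'I_2 -> V) : \sum_j F j = F 0 + F 1.
Proof.
rewrite big_ord_recr big_ord_recr big_ord0 /= add0r.
by congr (F _ + F _); apply: val_inj.
Qed.

Lemma normC_real (a : R) : `|a%:C| = `|a|%:C.
Proof. rewrite normc_def /=. by rewrite expr0n /= addr0 sqrtr_sqr. Qed.

Lemma trnorm_off y : trnorm (mkM 0 y 0) = 2 * `|y|.
Proof.
have nA : mkM 0 y 0 \is normalmx.
  apply/normalmxP.
  have -> : (mkM 0 y 0) ^t Num.conj_op = mkM 0 y 0 by exact: adj_mkM.
  by [].
move/orthomx_spectralP: nA.
rewrite /trnorm.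
set P := spectralmx _; set d := spectral_diag _ => eqA.
have Pu : P \in unitmx by exact: spectral_unit.
have htr : \tr (mkM 0 y 0) = \sum_j d 0 j.
  by rewrite {1}eqA mxtrace_mulC mulmxA mulmxV // mul1mx mxtrace_diag.
have htr2 : \tr (mkM 0 y 0 *m mkM 0 y 0) = \sum_j (d 0 j * d 0 j).
  rewrite {1 2}eqA -!mulmxA mulKVmx // mxtrace_mulC -!mulmxA mulmxV // mulmx1.
  by rewrite mulmx_diag mxtrace_diag; apply: eq_bigr => j _; rewrite mxE.
rewrite tr_mkM sum2 in htr; rewrite tr_mkM_mul sum2 in htr2.
rewrite sum2.
set d0 := d 0 0 in htr htr2 *; set d1 := d 0 1 in htr htr2 *.
have d1E : d1 = - d0.
  by apply/eqP; rewrite -addr_eq0 addrC -htr addr0 rmorph0.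
have hsq : 2%:R * ((d0 - y%:C) * (d0 + y%:C)) = 0.
  have -> : 2%:R * ((d0 - y%:C) * (d0 + y%:C)) =
            d0 * d0 + d1 * d1 - (0 * 0 + 2 * y * y + 0 * 0)%:C.
    rewrite d1E !rmorphD !rmorphM !rmorph0 /= rmorph_nat; ring.
  by rewrite -htr2 subrr.
have [hd0|hd0] : d0 = y%:C \/ d0 = - y%:C.
  move/eqP: hsq; rewrite mulf_eq0 pnatr_eq0 /= mulf_eq0 !subr_eq0 addr_eq0.
  by case/orP => /eqP ->; [left|right].
  by rewrite d1E normrN hd0 normC_real -rmorphD /=; ring.
by rewrite d1E normrN hd0 normrN normC_real -rmorphD /=; ring.
Qed.

Lemma coh_mkM x y z : coh (mkM x y z) = 2 * `|y|.
Proof. by rewrite /coh dephase_mkM mkM_sub !subrr subr0 trnorm_off. Qed.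
Lemma psd_mkM (k a b : R) : 0 <= k -> psd (mkM (k * a^+2) (k * a * b) (k * b^+2)).
Proof.
move=> k0; split; first exact: adj_mkM.
move=> v.
set s := a%:C * v 0 0 + b%:C * v 1 0.
have -> : (adj v *m mkM (k * a ^+ 2) (k * a * b) (k * b ^+ 2) *m v) 0 0 =
          k%:C * (s * s^*).
  rewrite !mxE sum2 !mxE !sum2 !mxE /=.
  have hc : forall x : R, Num.conj_op (x%:C) = x%:C by move=> x; exact: conjc_real.
  rewrite /s rmorphD !rmorphM /= !hc. ring.
by rewrite mulr_ge0 ?ler0c // mulcJ_ge0.
Qed.
Lemma in_hull_mem (s : seq M) A : A \in s -> in_hull s A.
Proof.
move=> As.
have hk : (index A s < size s)%N by rewrite index_mem.
exists (fun j : 'I_(size s) => if (j : nat) == index A s then 1 else 0).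
split; first by move=> j; case: ifP.
split.
  rewrite (bigD1 (Ordinal hk)) //= eqxx big1 ?addr0 // => j hj.
  case: ifP => // /eqP hj'; move: hj; suff -> : j = Ordinal hk by rewrite eqxx.
  exact: val_inj.
rewrite (bigD1 (Ordinal hk)) //= eqxx big1 ?addr0 ?scale1r ?nth_index // => j hj.
case: ifP; last by rewrite scale0r.
move=> /eqP hj'; move: hj; suff -> : j = Ordinal hk by rewrite eqxx.
exact: val_inj.
Qed.

Lemma in_hull_mix (s : seq M) A B (p : R) : in_hull s A -> in_hull s B ->
  0 <= p <= 1 -> in_hull s (p%:C *: A + (1 - p)%:C *: B).
Proof.
move=> [w1 [w1p [w1s ->]]] [w2 [w2p [w2s ->]]] /andP[p0 p1].
exists (fun j => p * w1 j + (1 - p) * w2 j).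
split; first by move=> j; rewrite addr_ge0 // mulr_ge0 // ?subr_ge0.
split; first by rewrite big_split /= -!mulr_sumr w1s w2s !mulr1 addrC subrK.
rewrite !scaler_sumr -big_split /=; apply: eq_bigr => j _.
by rewrite !scalerA -scalerDl -!rmorphM -rmorphD.
Qed.

Lemma supp_one (L : finType) (mu xi : L -> R) :
  (forall l, 0 <= mu l) -> \sum_l mu l = 1 -> (forall l, xi l <= 1) ->
  \sum_l xi l * mu l = 1 -> forall l, 0 < mu l -> xi l = 1.
Proof.
move=> mu0 mu1 xi1 hs.
have h : \sum_l (1 - xi l) * mu l = 0.
  under eq_bigr do rewrite mulrBl mul1r.
  by rewrite sumrB mu1 hs subrr.
move=> l ml.
have hF : forall i : L, true -> 0 <= (1 - xi i) * mu i.
  by move=> i _; rewrite mulr_ge0 // subr_ge0.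
move: (@psumr_eq0P _ L xpredT _ hF h l isT) => /eqP.
rewrite mulf_eq0 (gt_eqF ml) orbF subr_eq0 => /eqP <-. by [].
Qed.

Lemma supp_zero (L : finType) (mu xi : L -> R) :
  (forall l, 0 <= mu l) -> (forall l, 0 <= xi l) ->
  \sum_l xi l * mu l = 0 -> forall l, 0 < mu l -> xi l = 0.
Proof.
move=> mu0 xi0 hs l ml.
have hF : forall i : L, true -> 0 <= xi i * mu i.
  by move=> i _; rewrite mulr_ge0.
move: (@psumr_eq0P _ L xpredT _ hF hs l isT) => /eqP.
by rewrite mulf_eq0 (gt_eqF ml) orbF => /eqP.
Qed.
Definition kk (t : R) : R := (1 + t^+2)^-1.
Definition Proj (t : R) : M := mkM (kk t) (kk t * t) (kk t * t^+2).

Lemma kk_gt0 t : 0 < kk t.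
Proof. by rewrite /kk invr_gt0 ltr_pwDl // sqr_ge0. Qed.

Lemma kk_le1 t : kk t <= 1.
Proof. by rewrite /kk invf_le1 ?ler_wpDr ?sqr_ge0 // ltr_pwDl // sqr_ge0. Qed.

Lemma nz1t (t : R) : 1 + t^+2 != 0.
Proof. by rewrite gt_eqF // ltr_pwDl // sqr_ge0. Qed.

Lemma compl_Proj t : 1%:M - Proj t = mkM (kk t * t^+2) (kk t * t * (-1)) (kk t * (-1)^+2).
Proof.
rewrite mkM1 /Proj mkM_sub; apply: mkM_ext; rewrite /kk; have := nz1t t => h; field => //.
Qed.

Lemma density_Proj t : density (Proj t).
Proof.
split.
  have -> : Proj t = mkM (kk t * 1^+2) (kk t * 1 * t) (kk t * t^+2).
    by rewrite /Proj; apply: mkM_ext; ring.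
  exact/psd_mkM/ltW/kk_gt0.
rewrite /Proj tr_mkM -[1]/(1%:C); congr (_%:C); rewrite /kk; have := nz1t t => h; field => //.
Qed.

Lemma povm_Proj t : povm [:: Proj t; 1%:M - Proj t].
Proof.
split.
  move=> E; rewrite !inE => /orP[] /eqP ->; first by case: (density_Proj t).
  by rewrite compl_Proj; apply/psd_mkM/ltW/kk_gt0.
by rewrite !big_cons big_nil addr0 addrC subrK.
Qed.

Lemma coh_Proj t : coh (Proj t) = 2 * (kk t * `|t|).
Proof. by rewrite /Proj coh_mkM normrM ger0_norm // ltW // kk_gt0. Qed.

Lemma coh_cProj t : coh (1%:M - Proj t) = 2 * (kk t * `|t|).
Proof. by rewrite compl_Proj coh_mkM !normrM normrN1 mulr1 ger0_norm // ltW // kk_gt0. Qed.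

Lemma tr_Proj u v : \tr (Proj v *m Proj u) =
   (kk u * kk v * (1 + u * v)^+2)%:C.
Proof. rewrite /Proj tr_mkM_mul; congr (_%:C); ring. Qed.

Lemma tr_cProj u : \tr ((1%:M - Proj u) *m Proj u) = 0.
Proof.
rewrite compl_Proj /Proj tr_mkM_mul -[0]/(0%:C); congr (_%:C).
rewrite /kk; have := nz1t u => h; field => //.
Qed.
Lemma kk_sq u : kk u * kk u * (1 + u * u)^+2 = 1.
Proof. rewrite /kk; have := nz1t u => h; field => //. Qed.

Lemma mix_pos (p q a1 a3 a2 a4 : R) : 0 < p -> p <= 1 -> 0 <= q -> q <= 1 ->
  0 < a1 -> 0 <= a3 -> 0 <= a2 -> 0 <= a4 ->
  p * a1 + (1 - p) * a3 = q * a2 + (1 - q) * a4 -> 0 < a2 \/ 0 < a4.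
Proof.
move=> p0 p1 q0 q1 a10 a30 a20 a40 h.
case: (ltrP 0 a2) => h2; first by left.
case: (ltrP 0 a4) => h4; first by right.
have e2 : a2 = 0 by apply/le_anti; rewrite h2 a20.
have e4 : a4 = 0 by apply/le_anti; rewrite h4 a40.
move: h; rewrite e2 e4 !mulr0 addr0 => h.
have : 0 < p * a1 + (1 - p) * a3.
  by rewrite ltr_pwDl ?mulr_gt0 // mulr_ge0 // subr_ge0.
by rewrite h ltxx.
Qed.

Lemma lam_contra (lam x y : R) : 0 < lam -> lam < 1 -> x <= 1 -> y = 0 ->
  1 / 2 * 1 + (1 - 1 / 2) * 1 = lam * x + (1 - lam) * (1 / 2 * y + (1 - 1 / 2) * 1) -> False.
Proof. move=> l0 l1 x1 -> h. nra. Qed.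
Lemma no_nc (b : R) : 0 < b -> b < 1 ->
  ~ nc_model [:: Proj (-b); Proj 0; Proj (b/2); Proj b]
     (flatten [:: [:: Proj (-b); 1%:M - Proj (-b)]; [:: Proj 0; 1%:M - Proj 0];
                  [:: Proj b; 1%:M - Proj b]]).
Proof.
move=> b0 b1 [L [mu [xi [Hmu [Hmul [Hxi [Hxil [Hxi1 Hrep]]]]]]]].
set S := [:: _; _; _; _] in Hmu Hmul Hrep.
set E := flatten _ in Hxi Hxil Hrep.
have hS1 : Proj (-b) \in S by rewrite !inE eqxx.
have hS2 : Proj 0 \in S by rewrite !inE eqxx ?orbT.
have hS3 : Proj (b/2) \in S by rewrite !inE eqxx ?orbT.
have hS4 : Proj b \in S by rewrite !inE eqxx ?orbT.
have hE1 : Proj (-b) \in E by rewrite /E /= !inE eqxx ?orbT.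
have hEQ : 1%:M - Proj (-b) \in E by rewrite /E /= !inE eqxx ?orbT.
have hE2 : Proj 0 \in E by rewrite /E /= !inE eqxx ?orbT.
have hE4 : Proj b \in E by rewrite /E /= !inE eqxx ?orbT.
have hullS x : x \in S -> in_hull S x by exact: in_hull_mem.
have hullE x : x \in E -> in_hull (0 :: 1%:M :: E) x.
  by move=> hx; apply: in_hull_mem; rewrite in_cons in_cons hx !orbT.
have hull0 : in_hull (0 :: 1%:M :: E) 0 by apply: in_hull_mem; rewrite !inE eqxx.
have hull1 : in_hull (0 :: 1%:M :: E) 1%:M by apply: in_hull_mem; rewrite !inE eqxx ?orbT.
have xi_le1 F l : in_hull (0 :: 1%:M :: E) F -> xi F l <= 1.
  by move=> h; case/andP: (Hxi F h l).
have xi_ge0 F l : in_hull (0 :: 1%:M :: E) F -> 0 <= xi F l.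
  by move=> h; case/andP: (Hxi F h l).
have mu_ge0 x l : x \in S -> 0 <= mu x l by move=> h; case: (Hmu x (hullS x h)) => /(_ l).
have mu_1 x : x \in S -> \sum_l mu x l = 1 by move=> h; case: (Hmu x (hullS x h)).
have rep x u : x \in S -> Proj u \in E -> forall v, x = Proj v ->
   \sum_l xi (Proj u) l * mu x l = kk v * kk u * (1 + v * u)^+2.
  move=> hx hu v ex; have := Hrep x (Proj u) hx hu.
  by rewrite ex tr_Proj => /complexI.
have supp x u : x \in S -> Proj u \in E -> x = Proj u ->
    forall l, 0 < mu x l -> xi (Proj u) l = 1.
  move=> hx hu ex; apply: supp_one; first by move=> l; exact: mu_ge0.
  - exact: mu_1.
  - by move=> l; apply: xi_le1; exact: hullE.
  by rewrite (rep x u hx hu u ex) kk_sq.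
have hP1 := supp _ _ hS1 hE1 erefl.
have hQ1 : forall l, 0 < mu (Proj (-b)) l -> xi (1%:M - Proj (-b)) l = 0.
  apply: supp_zero; first by move=> l; exact: mu_ge0.
    by move=> l; apply: xi_ge0; exact: hullE.
  have := Hrep _ _ hS1 hEQ; rewrite tr_cProj => /complexI; by move=> <-.
have h12 : 0 <= (1 / 2 : R) <= 1 by apply/andP; split; lra.
have hx0 : forall l, 0 < mu (Proj (-b)) l -> xi 0 l = 0.
  move=> l hl.
  have eqH : (1/2)%:C *: Proj (-b) + (1 - 1/2)%:C *: (1%:M - Proj (-b)) =
             (1/2)%:C *: 0 + (1 - 1/2)%:C *: 1%:M :> M.
    have -> : (1 - 1/2 : R) = 1/2 by lra.
    by rewrite -scalerDr addrC subrK scaler0 add0r.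
  have := Hxil _ _ _ (hullE _ hE1) (hullE _ hEQ) h12 l.
  rewrite eqH Hxil // Hxi1 hP1 // hQ1 // => h; lra.
set H : M := (1/2)%:C *: 0 + (1 - 1/2)%:C *: 1%:M.
have hullH : in_hull (0 :: 1%:M :: E) H by apply: in_hull_mix.
have xiH l : xi H l = 1 / 2 * xi 0 l + (1 - 1/2) * 1 by rewrite /H Hxil // Hxi1.
set lam := (1 - b^+2) / (1 + b^+2).
have lam0 : 0 < lam by rewrite /lam divr_gt0 // ?subr_gt0 ?ltr_pwDl ?sqr_ge0 //; nra.
have lam1 : lam < 1.
  rewrite /lam ltr_pdivrMr ?ltr_pwDl ?sqr_ge0 //; nra.
have hlam : 0 <= lam <= 1 by apply/andP; split; [exact: ltW|exact: ltW].
have E2 : (1/2)%:C *: Proj (-b) + (1 - 1/2)%:C *: Proj b =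
          lam%:C *: Proj 0 + (1 - lam)%:C *: H.
  rewrite /H scaler0 add0r mkM1 /Proj !mkM_scale !mkM_add; apply: mkM_ext;
    rewrite /lam /kk; have := nz1t b => hb; field => //.
set p := (1 + b^+2) / (3 * (3 + b^+2)).
set q := 2 / (3 + b^+2).
have hb3 : 0 < 3 + b^+2 by nra.
have p0 : 0 < p.
  by apply: divr_gt0; [nra | rewrite mulr_gt0].
have p1 : p <= 1.
  rewrite /p ler_pdivrMr; last by rewrite mulr_gt0.
  rewrite mul1r; nra.
have q0 : 0 <= q by rewrite /q divr_ge0 // ltW.
have q1 : q <= 1.
  rewrite /q ler_pdivrMr // mul1r; nra.
have E1 : p%:C *: Proj (-b) + (1 - p)%:C *: Proj (b/2) =
          q%:C *: Proj 0 + (1 - q)%:C *: Proj b.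
  rewrite /Proj !mkM_lin; apply: mkM_ext;
    rewrite /p /q /kk; have := nz1t b => hb; have := nz1t (b/2) => hb2;
    have hb3' : 3 + b^+2 != 0 by rewrite gt_eqF.
  - by field; repeat (apply/andP; split); apply/negbT/gt_eqF; nra.
  - by field; repeat (apply/andP; split); apply/negbT/gt_eqF; nra.
  - by field; repeat (apply/andP; split); apply/negbT/gt_eqF; nra.
have p01 : 0 <= p <= 1 by rewrite (ltW p0) p1.
have q01 : 0 <= q <= 1 by rewrite q0 q1.
have key : forall l, 0 < mu (Proj (-b)) l -> xi (Proj 0) l = 1.
  move=> l hl.
  have hm := Hmul _ _ _ (hullS _ hS1) (hullS _ hS3) p01 l.
  rewrite E1 (Hmul _ _ _ (hullS _ hS2) (hullS _ hS4) q01) in hm.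
  case: (mix_pos _ _ _ _ _ _ p0 p1 q0 q1 hl (mu_ge0 _ l hS3) (mu_ge0 _ l hS2) (mu_ge0 _ l hS4) (esym hm)) => h.
    exact: (supp _ _ hS2 hE2 erefl l h).
  exfalso; have h4 := supp _ _ hS4 hE4 erefl l h.
  have := Hxil _ _ _ (hullE _ hE1) (hullE _ hE4) h12 l.
  rewrite E2 (Hxil _ _ _ (hullE _ hE2) hullH hlam) xiH hP1 // h4 => hh.
  exact: (lam_contra _ _ _ lam0 lam1 (xi_le1 _ l (hullE _ hE2)) (hx0 l hl) (esym hh)).
have hsum : \sum_l xi (Proj 0) l * mu (Proj (-b)) l = 1.
  rewrite -(mu_1 _ hS1); apply: eq_bigr => l _.
  case: (ltrP 0 (mu (Proj (-b)) l)) => h; first by rewrite key // mul1r.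
  have -> : mu (Proj (-b)) l = 0 by apply/le_anti; rewrite h mu_ge0.
  by rewrite mulr0.
rewrite (rep _ 0 hS1 hE2 (-b) erefl) in hsum.
have e1 : kk (-b) * kk 0 * (1 + -b * 0)^+2 = kk b.
  by rewrite /kk; field; repeat (apply/andP; split); apply/negbT/gt_eqF; nra.
have e2 : kk b * (1 + b^+2) = 1.
  by rewrite /kk; field; repeat (apply/andP; split); apply/negbT/gt_eqF; nra.
rewrite e1 in hsum; rewrite hsum mul1r in e2; nra.
Qed.
End Aux.

Arguments Proj {R}.
Arguments no_nc {R}.
Arguments density_Proj {R}.
Arguments povm_Proj {R}.
Arguments coh_Proj {R}.
Arguments coh_cProj {R}.
Arguments kk {R}.
Arguments kk_gt0 {R}.
Arguments kk_le1 {R}.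

Theorem mainTheorem1 (R : realType) (eps : R) (heps : 0 < eps) :
  exists (S : seq 'M[R[i]]_2) (Ps : seq (seq 'M[R[i]]_2)),
    (forall rho, rho \in S -> density rho) /\
    (forall P, P \in Ps -> povm P) /\
    (forall X, X \in S ++ flatten Ps -> coh X <= eps) /\
    (exists2 rho, rho \in S & 0 < coh rho) /\
    (exists2 E, E \in flatten Ps & 0 < coh E) /\
    ~ nc_model S (flatten Ps).
Proof.
set m := Num.min eps 1.
have m0 : 0 < m by rewrite lt_min heps ltr01.
have m1 : m <= 1 by rewrite ge_min lexx orbT.
have me : m <= eps by rewrite ge_min lexx.
set b : R := m / 4.
have hb0 : 0 < b by rewrite /b; lra.
have hb1 : b < 1 by rewrite /b; lra.
have hbe : 4 * b <= eps by rewrite /b; lra.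
have cohb t : `|t| <= b -> 2 * (kk t * `|t|) <= eps.
  move=> ht; have := kk_le1 t; have := kk_gt0 t; have := normr_ge0 t; nra.
exists [:: Proj (-b); Proj 0; Proj (b/2); Proj b].
exists [:: [:: Proj (-b); 1%:M - Proj (-b)]; [:: Proj 0; 1%:M - Proj 0];
           [:: Proj b; 1%:M - Proj b]].
split.
  by move=> rho; rewrite !inE => /or4P [] /eqP ->; exact: density_Proj.
split.
  by move=> P; rewrite !inE => /or3P [] /eqP ->; exact: povm_Proj.
split.
  apply/allP; rewrite /= !coh_Proj !coh_cProj.
  have h1 : `|-b| <= b by rewrite normrN gtr0_norm.
  have h2 : `|0 : R| <= b by rewrite normr0 ltW.
  have h3 : `|b / 2| <= b by rewrite gtr0_norm; lra.
  have h4 : `|b| <= b by rewrite gtr0_norm.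
  by rewrite !cohb.
split.
  exists (Proj b); first by rewrite !inE eqxx ?orbT.
  by rewrite coh_Proj mulr_gt0 // mulr_gt0 ?kk_gt0 ?normr_gt0 ?gt_eqF.
split.
  exists (Proj b); first by rewrite /= !inE eqxx ?orbT.
  by rewrite coh_Proj mulr_gt0 // mulr_gt0 ?kk_gt0 ?normr_gt0 ?gt_eqF.
by apply: no_nc.
Qed.
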